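(* Let $V_1,V_2:\mathbb{R}\to\mathbb{R}$ satisfy the assumptions (C1), (C2) below, let $k(x,y)=e^{-V_1(y)-V_2(y-x)}$, let $\lambda>0$ be the spectral radius of the integral operator $(\mathcal{K}f)(x)=\int_\mathbb{R} k(x,y)f(y)\,dy$ on $L^2(\mathbb{R})$, and let $v$ be a positive right eigenfunction, $v(x)=\lambda^{-1}\int_\mathbb{R} k(x,y)v(y)\,dy$ for all $x$. Let $p(x,y)=\frac{k(x,y)v(y)}{\lambda v(x)}$. For $a,b\in\mathbb{R}$, under a probability $\mathbf{P}^{(a,b)}$ let $(Y_n)_{n\ge0}$ be a Markov chain on $\mathbb{R}$ with $Y_0=a$ and transition kernel $p(x,y)\,dy$, and let $W_0=b$, $W_n=b+Y_1+\dots+Y_n$. Then for every $n\in\mathbb{N}$, setting $w_{-1}:=b-a$ and $w_0:=b$, $$\mathbf{P}^{(a,b)}\big((W_1,\dots,W_n)\in(dw_1,\dots,dw_n)\big)=\frac{v(w_n-w_{n-1})}{\lambda^n v(a)}\,e^{-\mathcal{H}_{[-1,n]}(w_{-1},\dots,w_n)}\prod_{i=1}^n dw_i,$$ where $\mathcal{H}_{[-1,n]}(w_{-1},\dots,w_n)=\sum_{i=1}^{n}V_1(w_i-w_{i-1})+\sum_{i=0}^{n-1}V_2(w_{i+1}+w_{i-1}-2w_i)$.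
   Context: Assumptions: (C1) $V_1$ measurable, bounded from below, symmetric, $\lim_{|x|\to\infty}V_1(x)=+\infty$, $\int e^{-2V_1}<\infty$; (C2) $V_2$ measurable, bounded from below, bounded above on $[-\gamma,\gamma]$ for some $\gamma>0$, $\int|x|e^{-V_2(x)}dx<\infty$. Under these assumptions $\mathcal{K}$ is Hilbert–Schmidt, its spectral radius $\lambda>0$ is an isolated eigenvalue with an eigenfunction $v\in L^2(\mathbb{R})$, $v>0$ everywhere (defined pointwise by the eigen-equation), so $p(x,\cdot)$ is a probability density for each $x$. *)

(* Defs.v *)
From mathcomp Require Import all_boot all_order all_algebra.
From mathcomp Require Import all_classical all_reals all_analysis.
Import Order.TTheory GRing.Theory Num.Theory.
Import numFieldNormedType.Exports.
Set Implicit Arguments. Unset Strict Implicit. Unset Printing Implicit Defensive.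
Local Open Scope classical_set_scope.
Local Open Scope ring_scope.

Section Defs.
Context {R : realType}.
Local Notation mu := (@lebesgue_measure R).

Definition kern (V1 V2 : R -> R) (x y : R) : R := expR (- V1 y - V2 (y - x)).

Definition intop (k : R -> R -> R) (f : R -> R) (x : R) : R :=
  fine (\int[mu]_y ((k x y * f y)%:E))%E.

Definition L2sq (f : R -> R) : \bar R := (\int[mu]_x ((f x ^+ 2)%:E))%E.

Definition in_L2 (f : R -> R) : Prop :=
  measurable_fun setT f /\ (L2sq f < +oo)%E.

Definition opnorm_sq (k : R -> R -> R) (n : nat) : \bar R :=
  ereal_sup [set L2sq (iter n (intop k) f) |
             f in [set f | measurable_fun setT f /\ (L2sq f <= 1)%E]].

(* lam is the spectral radius of K on L^2 (Gelfand's formula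
   r(K) = lim_n ||K^n||^(1/n)) *)
Definition is_spectral_radius (k : R -> R -> R) (lam : R) : Prop :=
  (fun n : nat => Num.sqrt (fine (opnorm_sq k n.+1)) `^ (n.+1%:R^-1)) @ \oo
    --> lam.

Definition cond_C1 (V1 : R -> R) : Prop :=
  [/\ measurable_fun setT V1,
      (exists m : R, forall x, m <= V1 x),
      (forall x, V1 (- x) = V1 x),
      (forall M : R, exists r : R, forall x, r < `|x| -> M < V1 x)
    & (\int[mu]_x ((expR (- (2 * V1 x)))%:E) < +oo)%E].

Definition cond_C2 (V2 : R -> R) : Prop :=
  [/\ measurable_fun setT V2,
      (exists m : R, forall x, m <= V2 x),
      (exists gamma : R, 0 < gamma /\
         exists M : R, forall x, `|x| <= gamma -> V2 x <= M)
    & (\int[mu]_x ((`|x| * expR (- V2 x))%:E) < +oo)%E].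

Fixpoint chain_int (p : R -> R -> R) (A : nat -> set R) (i n : nat) (x : R)
  : \bar R :=
  match n with
  | 0 => 1%E
  | n'.+1 => (\int[mu]_(y in A i) ((p x y)%:E * chain_int p A i.+1 n' y))%E
  end.

(* (Y_n) is a Markov chain with Y_0 = a and transition kernel p(x,y)dy:
   its finite-dimensional distributions are
   P(Y_0 in A_0, ..., Y_n in A_n)
     = 1_{A_0}(a) \int_{A_1} p(a,y_1) ... \int_{A_n} p(y_{n-1},y_n) dy_n ... dy_1 *)
Definition markov_chain {d : measure_display} {T : measurableType d}
  (P : probability T R) (Y : nat -> T -> R) (a : R) (p : R -> R -> R) : Prop :=
  (forall n, measurable_fun setT (Y n)) /\
  forall (n : nat) (A : nat -> set R), (forall i, measurable (A i)) ->
    P [set w | forall i, (i <= n)%N -> A i (Y i w)] =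
      (((\1_(A 0) a : R))%:E * chain_int p A 1 n a)%E.

Fixpoint iint (n : nat) (A : nat -> set R) (i : nat) (F : seq R -> \bar R)
  : \bar R :=
  match n with
  | 0 => F [::]
  | n'.+1 => (\int[mu]_(w in A i) iint n' A i.+1 (fun s => F (w :: s)))%E
  end.

(* w_(j-1) for the configuration (w_(-1), w_0, w_1, ..., w_n)
   = (b - a, b, s) *)
Definition wcfg (a b : R) (s : seq R) (j : nat) : R := nth 0 [:: b - a, b & s] j.

Definition Hamil (V1 V2 : R -> R) (n : nat) (w : nat -> R) : R :=
  \sum_(1 <= i < n.+1) V1 (w i.+1 - w i)
  + \sum_(0 <= i < n) V2 (w i.+2 + w i - 2 * w i.+1).

End Defs.

(* Main.v *)
Require Import Defs.
From HB Require Import structures.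
From mathcomp Require Import all_boot all_order all_algebra.
From mathcomp Require Import all_classical all_reals all_analysis.
From mathcomp Require Import measurable_realfun.
From mathcomp Require Import lra ring.
Import Order.TTheory GRing.Theory Num.Theory.
Import numFieldNormedType.Exports.
Local Open Scope classical_set_scope.
Local Open Scope ring_scope.
Section Chain.
Context {R : realType}.
Local Notation mu := (@lebesgue_measure R).
Variable p : R -> R -> R.
Hypothesis mp : measurable_fun setT (fun xy : R * R => p xy.1 xy.2).
Hypothesis p0 : forall x y, 0 <= p x y.

Fixpoint Phi (n : nat) (x : R) (f : seq R -> \bar R) : \bar R :=
  match n with
  | 0 => f [::]
  | n'.+1 => (\int[mu]_y ((p x y)%:E * Phi n' y (fun s => f (y :: s))))%E
  end.

Lemma Phi_ge0 n x f : (forall s, 0 <= f s)%E -> (0 <= Phi n x f)%E.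
Proof.
elim: n x f => [|n IH] x f f0 /=; first exact: f0.
apply: integral_ge0 => y _; apply: mule_ge0; first by rewrite lee_fin.
by apply: IH => s; apply: f0.
Qed.

Lemma Phi_ext n x f g : (forall s, size s = n -> f s = g s) -> Phi n x f = Phi n x g.
Proof.
elim: n x f g => [|n IH] x f g fg /=; first exact: fg.
apply: eq_integral => y _; congr (_ * _)%E; apply: IH => s sn.
by apply: fg => /=; rewrite sn.
Qed.

Lemma Phi0 n x : Phi n x (fun _ => 0%E) = 0%E.
Proof.
elim: n x => [|n IH] x //=.
by rewrite (eq_integral (fun _ => 0%E)) ?integral0// => y _; rewrite IH mule0.
Qed.

Lemma Phi_meas n : forall (dX : measure_display) (X : measurableType dX)
  (f : X -> seq R -> \bar R),
  measurable_fun setT (fun zt : X * n.-tuple R => f zt.1 zt.2) ->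
  (forall z s, 0 <= f z s)%E ->
  measurable_fun setT (fun zx : X * R => Phi n zx.2 (f zx.1)).
Proof.
elim: n => [|n IH] dX X f mf f0.
  rewrite (_ : (fun zx : X * R => Phi 0 zx.2 (f zx.1)) =
     (fun zt : X * 0.-tuple R => f zt.1 zt.2) \o (fun zx : X * R => (zx.1, [tuple]))) //.
  apply: measurableT_comp => //; apply: measurable_fun_pair => //.
pose h := fun q : (X * R) * R => ((p q.1.2 q.2)%:E * Phi n q.2 (fun s => f q.1.1 (q.2 :: s)))%E.
have h0 q : (0 <= h q)%E.
  by apply: mule_ge0; [rewrite lee_fin|apply: Phi_ge0 => s; exact: f0].
have mh : measurable_fun setT h.
  apply: emeasurable_funM.
    apply/measurable_EFinP.
    rewrite (_ : (fun q : (X * R) * R => p q.1.2 q.2) = (fun xy : R * R => p xy.1 xy.2) \o (fun q : (X * R) * R => (q.1.2, q.2))) //.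
    apply: measurableT_comp => //; apply: measurable_fun_pair => //.
    exact: measurableT_comp.
  pose f' := fun (zy : X * R) (s : seq R) => f zy.1 (zy.2 :: s).
  have mf' : measurable_fun setT (fun zt : (X * R) * n.-tuple R => f' zt.1 zt.2).
    rewrite (_ : (fun zt : (X * R) * n.-tuple R => f' zt.1 zt.2) =
      (fun zt : X * n.+1.-tuple R => f zt.1 zt.2) \o
      (fun zt : (X * R) * n.-tuple R => (zt.1.1, [tuple of zt.1.2 :: zt.2]))) //.
    apply: measurableT_comp => //; apply: measurable_fun_pair.
      exact: measurableT_comp.
    apply: measurable_cons => //; exact: measurableT_comp.
  rewrite (_ : (fun q : (X * R) * R => Phi n q.2 (fun s => f q.1.1 (q.2 :: s))) =
    (fun zx : (X * R) * R => Phi n zx.2 (f' zx.1)) \o (fun q : (X * R) * R => ((q.1.1, q.2), q.2))) //.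
  apply: measurableT_comp; first exact: (IH _ _ f' mf' (fun z s => f0 _ _)).
  apply: measurable_fun_pair => //; apply: measurable_fun_pair => //.
  exact: measurableT_comp.
exact: (measurable_fun_fubini_tonelli_F (m2 := mu) h mh h0).
Qed.

Lemma Phi_meas_diag n (f : R -> seq R -> \bar R) :
  measurable_fun setT (fun yt : R * n.-tuple R => f yt.1 yt.2) ->
  (forall y s, 0 <= f y s)%E ->
  measurable_fun setT (fun y => Phi n y (f y)).
Proof.
move=> mf f0.
rewrite (_ : (fun y => Phi n y (f y)) = (fun zx : R * R => Phi n zx.2 (f zx.1)) \o (fun y => (y, y))) //.
apply: measurableT_comp; first exact: Phi_meas.
exact: measurable_fun_pair.
Qed.

Lemma Phi_meas1 n (f : seq R -> \bar R) :
  measurable_fun setT (fun t : n.-tuple R => f t) -> (forall s, 0 <= f s)%E ->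
  measurable_fun setT (fun x => Phi n x f).
Proof.
move=> mf f0; apply: (@Phi_meas_diag n (fun _ => f)) => //.
rewrite (_ : (fun yt : R * n.-tuple R => f yt.2) = (fun t : n.-tuple R => f t) \o snd) //.
exact: measurableT_comp.
Qed.

Lemma meas_cons n (f : seq R -> \bar R) (y : R) :
  measurable_fun setT (fun t : n.+1.-tuple R => f t) ->
  measurable_fun setT (fun t : n.-tuple R => f (y :: t)).
Proof.
move=> mf.
rewrite (_ : (fun t : n.-tuple R => f (y :: t)) = (fun t : n.+1.-tuple R => f t) \o (fun t : n.-tuple R => [tuple of y :: t])) //.
apply: measurableT_comp => //; apply: measurable_cons => //; exact: measurable_cst.
Qed.

Lemma Phi_series n x (f : nat -> seq R -> \bar R) :
  (forall k, measurable_fun setT (fun t : n.-tuple R => f k t)) ->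
  (forall k s, 0 <= f k s)%E ->
  Phi n x (fun s => \sum_(k <oo) f k s)%E = (\sum_(k <oo) Phi n x (f k))%E.
Proof.
elim: n x f => [|n IH] x f mf f0 //=.
transitivity (\int[mu]_y ((\sum_(k <oo) ((p x y)%:E * Phi n y (fun s => f k (y :: s))))%E))%E.
  apply: eq_integral => y _; rewrite (IH y (fun k s => f k (y :: s))).
  - by rewrite nneseriesZl // => k _; apply: Phi_ge0 => s; exact: f0.
  - by move=> k; apply: meas_cons.
  - by move=> k s; exact: f0.
apply: integral_nneseries => //.
  move=> k; apply: emeasurable_funM.
    apply/measurable_EFinP.
    exact: (measurable_fun_pair2 x mp).
  apply: (@Phi_meas_diag n (fun y s => f k (y :: s))) => [|y s]; last exact: f0.
  rewrite (_ : (fun yt : R * n.-tuple R => f k (yt.1 :: yt.2)) = (fun t : n.+1.-tuple R => f k t) \o (fun yt : R * n.-tuple R => [tuple of yt.1 :: yt.2])) //.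
  apply: measurableT_comp => //; exact: measurable_cons.
move=> k y _; apply: mule_ge0; first by rewrite lee_fin.
by apply: Phi_ge0 => s; exact: f0.
Qed.

Fixpoint rectf (A : nat -> set R) (i : nat) (s : seq R) : \bar R :=
  match s with
  | [::] => 1%E
  | y :: s' => ((\1_(A i) y)%:E * rectf A i.+1 s')%E
  end.

Lemma Phi_rect n A i x : Phi n x (rectf A i) = chain_int p A i n x.
Proof.
elim: n A i x => [|n IH] A i x //=.
rewrite [RHS]integral_mkcond; apply: eq_integral => y _.
rewrite /patch indicE; case: ifPn => yA.
  by rewrite -IH; congr (_ * _)%E; apply: Phi_ext => s _; rewrite mul1e.
rewrite (_ : Phi n y _ = 0%E) ?mule0 //.
by rewrite -(Phi0 n y); apply: Phi_ext => s _; rewrite mul0e.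
Qed.

Section M2.
Variables (n : nat) (a : R).

Definition m2 (C : set (n.-tuple R)) : \bar R :=
  Phi n a (fun s => (\1_C (insubd (nseq_tuple n (0:R)) s))%:E).

Lemma m2_0 : m2 set0 = 0%E.
Proof.
by rewrite /m2 -(Phi0 n a); apply: Phi_ext => s _; rewrite indicE in_set0.
Qed.

Lemma m2_ge0 C : (0 <= m2 C)%E.
Proof. by apply: Phi_ge0 => s; rewrite lee_fin. Qed.

Lemma m2_sa : semi_sigma_additive m2.
Proof.
move=> F mF tF mUF.
have -> : m2 (\bigcup_k F k) = (\sum_(k <oo) m2 (F k))%E.
  rewrite /m2 -Phi_series.
  - by congr Phi; apply/funext => s; exact: indic_bigcup.
  - move=> k.
    rewrite (_ : (fun t : n.-tuple R => _) = (EFin \o \1_(F k))); last first.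
      by apply/funext => t /=; rewrite valKd.
    by apply/measurable_EFinP; exact: measurable_indic.
  - by move=> k s; rewrite lee_fin.
by apply: is_cvg_nneseries => i _ _; exact: m2_ge0.
Qed.


End M2.

End Chain.
Section Comb.
Context {R : realType}.

Lemma indic_iff (T1 T2 : Type) (A : set T1) (B : set T2) x y :
  (A x <-> B y) -> \1_A x = \1_B y :> R.
Proof.
move=> h; rewrite !indicE; have [Ax|nAx] := pselect (A x).
  by rewrite mem_set // mem_set //; apply/h.
by rewrite memNset // memNset // => /h.
Qed.

Fixpoint wind (A : nat -> set R) (i : nat) (c : R) (s : seq R) : \bar R :=
  match s with
  | [::] => 1%E
  | y :: s' => ((\1_(A i) (c + y))%:E * wind A i.+1 (c + y) s')%E
  end.

Lemma windE A i c s : wind A i c s =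
  (\1_[set s : seq R | forall j, (j < size s)%N -> A (i + j)%N (c + \sum_(k < j.+1) nth 0 s k)] s)%:E.
Proof.
elim: s i c => [|y s IH] i c /=.
  by rewrite indicE mem_set.
rewrite IH; have [Ay|nAy] := pselect (A i (c + y)).
  rewrite indicE mem_set // mul1e; congr (_%:E); apply: indic_iff; split.
    move=> H [_|j] /=; first by rewrite big_ord1 addn0.
    rewrite ltnS => js; rewrite big_ord_recl /= addrA -addSnnS.
    by under eq_bigr do rewrite /bump /=; exact: H.
  move=> H j js; have := H j.+1; rewrite /= ltnS big_ord_recl /= addrA -addSnnS => /(_ js).
  by under eq_bigr do rewrite /bump /=.
rewrite indicE memNset // mul0e; congr (_%:E); apply/esym.
rewrite indicE memNset //= => H; apply: nAy; have := H 0%N isT.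
by rewrite big_ord1 addn0.
Qed.

Lemma rectfE A i s : rectf A i s =
  (\1_[set s : seq R | forall j, (j < size s)%N -> A (i + j)%N (nth 0 s j)] s)%:E.
Proof.
elim: s i => [|y s IH] i /=.
  by rewrite indicE mem_set.
rewrite IH; have [Ay|nAy] := pselect (A i y).
  rewrite indicE mem_set // mul1e; congr (_%:E); apply: indic_iff; split.
    move=> H [_|j] /=; first by rewrite addn0.
    by rewrite ltnS -addSnnS; exact: H.
  by move=> H j js; have := H j.+1; rewrite /= ltnS -addSnnS => /(_ js).
rewrite indicE memNset // mul0e; congr (_%:E); apply/esym.
rewrite indicE memNset //= => H; apply: nAy; have := H 0%N isT.
by rewrite addn0.
Qed.

Lemma wind_meas (A : nat -> set R) (mA : forall i, measurable (A i)) n : forall i,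
  measurable_fun setT (fun ct : R * n.-tuple R => wind A i ct.1 ct.2).
Proof.
elim: n => [|n IH] i.
  rewrite (_ : (fun ct : R * 0.-tuple R => wind A i ct.1 ct.2) = cst 1%E).
    exact: measurable_cst.
  by apply/funext => -[c t]; rewrite (tuple0 t).
rewrite (_ : (fun ct : R * n.+1.-tuple R => wind A i ct.1 ct.2) =
  (fun ct => (\1_(A i) (ct.1 + thead ct.2))%:E * wind A i.+1 (ct.1 + thead ct.2) [tuple of behead ct.2])%E); last first.
  by apply/funext => -[c t] /=; rewrite [in LHS](tuple_eta t).
have mh : measurable_fun setT (fun ct : R * n.+1.-tuple R => ct.1 + thead ct.2).
  apply: measurable_funD => //; apply: measurableT_comp => //; exact: measurable_tnth.
apply: emeasurable_funM.
  apply/measurable_EFinP; exact: (measurableT_comp (@measurable_indic _ _ R setT _ (mA i)) mh).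
rewrite (_ : (fun ct : R * n.+1.-tuple R => wind A i.+1 (ct.1 + thead ct.2) [tuple of behead ct.2]) =
  (fun ct : R * n.-tuple R => wind A i.+1 ct.1 ct.2) \o (fun ct : R * n.+1.-tuple R => (ct.1 + thead ct.2, [tuple of behead ct.2]))) //.
apply: measurableT_comp; first exact: IH.
apply: measurable_fun_pair => //; exact: (measurableT_comp (@measurable_behead _ _ n) measurable_snd).
Qed.

Definition rect n (B : nat -> set R) : set (n.-tuple R) :=
  [set t | forall j : 'I_n, B j (tnth t j)].

Lemma rect_meas n (B : nat -> set R) : (forall j, measurable (B j)) -> measurable (rect n B).
Proof.
move=> mB.
pose F := fun j : nat => if (j < n)%N then [set t : n.-tuple R | B j (nth 0 t j)] else setT.
rewrite (_ : rect n B = \bigcap_(j in setT) F j).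
  apply: bigcap_measurable; first by exists 0%N.
  move=> j _; rewrite /F; case: ifPn => jn //.
  rewrite (_ : [set t : n.-tuple R | B j (nth 0 t j)] = (fun t : n.-tuple R => tnth t (Ordinal jn)) @^-1` B j).
    by rewrite -[X in measurable X]setTI; exact: measurable_tnth.
  by apply/seteqP; split => t /=; rewrite (tnth_nth 0).
apply/seteqP; split => t /=.
  move=> H j _; rewrite /F; case: ifPn => // jn /=.
  by have := H (Ordinal jn); rewrite (tnth_nth 0).
move=> H j; have := H j I; rewrite /F ltn_ord /=.
by rewrite (tnth_nth 0).
Qed.

Definition rects n : set (set (n.-tuple R)) :=
  [set C | exists B : nat -> set R, (forall j, measurable (B j)) /\ C = rect n B].

Lemma rects_gen n : (measurable : set (set (n.-tuple R))) `<=` <<s rects n >>.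
Proof.
move=> C; rewrite /measurable /=.
apply: smallest_sub; first exact: smallest_sigma_algebra.
apply: (big_ind (fun S : set (set (n.-tuple R)) => S `<=` <<s rects n >>)).
- by move=> ? [].
- by move=> S1 S2 h1 h2 X [/h1|/h2].
move=> j _ X [Y mY <-].
apply: sub_sigma_algebra.
exists (fun k => if k == nat_of_ord j then Y else setT); split.
  by move=> k; case: ifP.
apply/seteqP; split => t /=.
  move=> [_ Yt] k; case: eqP => // kj.
  by rewrite (_ : k = j) //; apply: val_inj.
by move=> H; split => //; have := H j; rewrite eqxx.
Qed.

End Comb.
Section Uniq.
Context {R : realType}.
Variable p : R -> R -> R.
Hypothesis mp : measurable_fun setT (fun xy : R * R => p xy.1 xy.2).
Hypothesis p0 : forall x y, 0 <= p x y.
Context {d : measure_display} {T : measurableType d} (P : probability T R) (Y : nat -> T -> R).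
Hypothesis mY : forall n, measurable_fun setT (Y n).
Variable a : R.
Hypothesis HM : forall n (A : nat -> set R), (forall i, measurable (A i)) ->
  P [set w | forall i, (i <= n)%N -> A i (Y i w)] = ((\1_(A 0) a : R)%:E * chain_int p A 1 n a)%E.
Variable n : nat.

HB.instance Definition _ := isMeasure.Build _ _ _ (m2 p n a) (@m2_0 R p n a) (@m2_ge0 R p p0 n a) (@m2_sa R p mp p0 n a).

Definition Ytup (om : T) : n.-tuple R := [tuple Y j.+1 om | j < n].

Lemma mYtup : measurable_fun setT Ytup.
Proof.
apply/measurable_fun_tnthP => j.
rewrite (_ : _ \o _ = Y j.+1); first exact: mY.
by apply/funext => om /=; rewrite tnth_mktuple.
Qed.

Definition m1 (C : set (n.-tuple R)) : \bar R := P (Ytup @^-1` C).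

Let m1_0 : m1 set0 = 0%E.
Proof. by rewrite /m1 preimage_set0 measure0. Qed.

Let m1_ge0 C : (0 <= m1 C)%E.
Proof. by apply: measure_ge0; rewrite -[X in measurable X]setTI; apply: mYtup. Qed.

Let m1_sa : semi_sigma_additive m1.
Proof.
move=> F mF tF mUF; rewrite /m1 preimage_bigcup.
apply: measure_semi_sigma_additive.
- by move=> k; rewrite -[X in measurable X]setTI; exact: mYtup.
- apply/trivIsetP => /= i j _ _ ij; rewrite -preimage_setI.
  by move/trivIsetP : tF => /(_ _ _ _ _ ij) ->//; rewrite preimage_set0.
- by rewrite -preimage_bigcup -[X in measurable X]setTI; exact: mYtup.
Qed.

HB.instance Definition _ := isMeasure.Build _ _ _ m1 m1_0 m1_ge0 m1_sa.

Lemma tnth_insubd (s : seq R) (j : 'I_n) : size s = n ->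
  tnth (insubd (nseq_tuple n (0:R)) s) j = nth 0 s j.
Proof. by move=> sn; rewrite (tnth_nth 0) val_insubd sn eqxx. Qed.

Lemma m1m2_rect C : rects n C -> m1 C = m2 p n a C.
Proof.
move=> [B [mB ->]].
pose A' := fun i : nat => if i is j.+1 then B j else setT.
have mA' i : measurable (A' i) by case: i => [|j]; rewrite /A' //; exact: mB.
transitivity (P [set w | forall i, (i <= n)%N -> A' i (Y i w)]).
  rewrite /m1; congr (P _); apply/seteqP; split => om /=.
    move=> H [|j] //= jn; have := H (Ordinal jn).
    by rewrite /Ytup tnth_mktuple.
  by move=> H j; have := H j.+1 (ltn_ord j); rewrite /Ytup tnth_mktuple.
rewrite HM // indicE mem_set // mul1e -Phi_rect /m2.
apply: Phi_ext => s sn; rewrite rectfE; congr (_%:E); apply: indic_iff; split.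
  by move=> H j; rewrite tnth_insubd //; have := H j; rewrite sn => /(_ (ltn_ord j)).
move=> H j js /=; rewrite sn in js.
by have := H (Ordinal js); rewrite tnth_insubd.
Qed.

Lemma m1m2 C : measurable C -> m1 C = m2 p n a C.
Proof.
move=> mC.
have Gm : (@rects R n) `<=` measurable.
  move=> X HX; case: HX => B [mB ->]; exact: rect_meas.
have Gg : forall k : nat, @rects R n ((fun _ => [set: n.-tuple R]) k).
  move=> k; rewrite /rects /=; exists (fun _ => setT); split => //.
  by apply/seteqP; split => // t _ j.
have gc : \bigcup_(k : nat) (fun _ => [set: n.-tuple R]) k = setT by rewrite bigcup_const.
have sI : setI_closed (@rects R n).
  move=> _ _ [B1 [mB1 ->]] [B2 [mB2 ->]].
  rewrite /rects /=; exists (fun j => B1 j `&` B2 j); split; first by move=> j; exact: measurableI.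
  apply/seteqP; split => t /=.
    by move=> [H1 H2] j; split.
  by move=> H; split => j; have [] := H j.
have fin : forall k : nat, (m1 ((fun _ => [set: n.-tuple R]) k) < +oo)%E.
  by move=> k; rewrite /m1 preimage_setT probability_setT ltry.
have := g_sigma_algebra_measure_unique (rects n) Gm _ Gg gc m1 (m2 p n a) sI.
move=> H; apply: H; [exact: m1m2_rect|exact: fin|exact: rects_gen].
Qed.

Lemma indic1E (T0 : Type) (Q : set T0) x : (\1_Q x)%:E = 1%E :> \bar R <-> Q x.
Proof.
split; last by move=> Qx; rewrite indicE mem_set.
rewrite indicE; have [Qx|nQx] := pselect (Q x) => //.
by rewrite memNset // => -[] /eqP; rewrite eq_sym oner_eq0.
Qed.

Lemma nth_Ytup om k : (k < n)%N -> nth 0 (Ytup om) k = Y k.+1 om.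
Proof.
move=> kn; have := tnth_mktuple (fun j : 'I_n => Y j.+1 om) (Ordinal kn).
by rewrite (tnth_nth 0).
Qed.

Lemma sum_Ytup om j : (j < n)%N ->
  \sum_(k < j.+1) nth 0 (Ytup om) k = \sum_(1 <= k < j.+2) Y k om.
Proof.
move=> jn; rewrite big_add1 /= big_mkord; apply: eq_bigr => k _; rewrite nth_Ytup //.
exact: (leq_trans (ltn_ord k) jn).
Qed.

Lemma event_Phi (A : nat -> set R) (mA : forall i, measurable (A i)) (b : R) :
  P [set om | forall i, (1 <= i <= n)%N -> A i (b + \sum_(1 <= k < i.+1) Y k om)] = Phi p n a (wind A 1 b).
Proof.
pose CW := [set t : n.-tuple R | wind A 1 b t = 1%E].
have mw : measurable_fun setT (fun t : n.-tuple R => wind A 1 b t).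
  rewrite (_ : (fun t : n.-tuple R => wind A 1 b t) = (fun ct : R * n.-tuple R => wind A 1 ct.1 ct.2) \o (fun t => (b, t))) //.
  apply: measurableT_comp; first exact: wind_meas.
  apply: measurable_fun_pair => //; exact: measurable_cst.
have mCW : measurable CW.
  by have := mw measurableT [set 1%E] (emeasurable_set1 _); rewrite setTI.
transitivity (m1 CW).
  rewrite /m1; congr (P _); apply/seteqP; split => om /=.
  - move=> H; rewrite /CW /= windE; apply/indic1E => j; rewrite size_tuple ?card_ord => jn.
    have := H j.+1; rewrite /= jn => /(_ isT).
    by rewrite sum_Ytup // add1n.
  - rewrite /CW /= windE => /indic1E H [//|j] /andP[_ jn].
    have := H j; rewrite size_tuple ?card_ord => /(_ jn).
    by rewrite sum_Ytup // add1n.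
rewrite m1m2 // /m2; apply: Phi_ext => s sn.
set t := insubd (nseq_tuple n 0) s.
have ts : val t = s by rewrite val_insubd sn eqxx.
rewrite -[in RHS]ts [RHS]windE; congr (_%:E); apply: indic_iff; split.
  by rewrite /CW /= windE => /indic1E.
by move=> H; rewrite /CW /= windE; apply/indic1E.
Qed.

End Uniq.
Section Shift.
Context {R : realType}.
Local Notation mu := (@lebesgue_measure R).
Variable b : R.
Let phi := fun w : R => w - b.
Let mphi : measurable_fun setT phi.
Proof. by apply: measurable_funB => //; exact: measurable_cst. Qed.

Definition shiftm (A : set (measurableTypeR R)) : \bar R := mu (phi @^-1` A).

Let shiftm_0 : shiftm set0 = 0%E.
Proof. by rewrite /shiftm preimage_set0 measure0. Qed.

Let shiftm_ge0 C : (0 <= shiftm C)%E.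
Proof. exact: measure_ge0. Qed.

Let shiftm_sa : semi_sigma_additive shiftm.
Proof.
move=> F mF tF mUF; rewrite /shiftm preimage_bigcup.
apply: measure_semi_sigma_additive.
- by move=> k; rewrite -[X in measurable X]setTI; apply: mphi => //; exact: (mF k).
- apply/trivIsetP => /= i j _ _ ij; rewrite -preimage_setI.
  by move/trivIsetP : tF => /(_ _ _ _ _ ij) ->//; rewrite preimage_set0.
- by rewrite -preimage_bigcup -[X in measurable X]setTI; apply: mphi => //; exact: mUF.
Qed.

HB.instance Definition _ := isMeasure.Build _ _ _ shiftm shiftm_0 shiftm_ge0 shiftm_sa.

Lemma shiftmE (A : set (measurableTypeR R)) : measurable A -> mu A = shiftm A.
Proof.
move=> mA; apply: (@lebesgue_measure_unique R shiftm) => // _ [[x y] _ <-] /=.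
rewrite /shiftm (_ : phi @^-1` _ = `]x + b, y + b]%classic); last first.
  apply/seteqP; split => w /=; rewrite !in_itv /= /phi.
    by move=> /andP[h1 h2]; apply/andP; split; lra.
  by move=> /andP[h1 h2]; apply/andP; split; lra.
rewrite !lebesgue_measure_itv /= !lte_fin ltrD2r.
by case: ifP => // _; rewrite -!EFinD; congr (_%:E); lra.
Qed.

Lemma integral_shift (h : R -> \bar R) : measurable_fun setT h -> (forall y, 0 <= h y)%E ->
  (\int[mu]_y h y = \int[mu]_w h ((w : R) - b)%R)%E.
Proof.
move=> mh h0.
transitivity (\int[shiftm]_y h y)%E.
  by apply: eq_measure_integral => A mA _; exact: (shiftmE A mA).
rewrite /shiftm.
have := @ge0_integral_pushforward _ _ (measurableTypeR R) (measurableTypeR R) R phi mphi mu setT h measurableT mh (fun y _ => h0 y).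
rewrite preimage_setT /pushforward => <-.
done.
Qed.
End Shift.

Section Dens.
Context {R : realType}.
Local Notation mu := (@lebesgue_measure R).
Variable p : R -> R -> R.
Hypothesis mp : measurable_fun setT (fun xy : R * R => p xy.1 xy.2).
Hypothesis p0 : forall x y, 0 <= p x y.

Fixpoint dens (a b : R) (s : seq R) : R :=
  match s with
  | [::] => 1
  | w :: s' => p a (w - b) * dens (w - b) w s'
  end.

Lemma iint_ext n A i (F G : seq R -> \bar R) :
  (forall s, size s = n -> F s = G s) -> iint n A i F = iint n A i G.
Proof.
elim: n i F G => [|n IH] i F G FG /=; first exact: FG.
apply: eq_integral => w _; apply: IH => s sn; apply: FG => /=; by rewrite sn.
Qed.

Lemma wind_ge0 (A : nat -> set R) i c s : (0 <= wind A i c s)%E.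
Proof. by rewrite windE lee_fin. Qed.

Variable A : nat -> set R.
Hypothesis mA : forall i, measurable (A i).

Lemma mh n i a b (k : R) : measurable_fun setT
  (fun y : R => ((k * (p a y * \1_(A i) (b + y)))%:E * Phi p n y (wind A i.+1 (b + y)))%E).
Proof.
apply: emeasurable_funM.
  apply/measurable_EFinP; apply: measurable_funM; first exact: measurable_cst.
  apply: measurable_funM; first exact: (measurable_fun_pair2 a mp).
  apply: (measurableT_comp (@measurable_indic _ _ R setT _ (mA i))).
  by apply: measurable_funD => //; exact: measurable_cst.
apply: (@Phi_meas_diag R p mp p0 n (fun y s => wind A i.+1 (b + y) s)); last by move=> *; exact: wind_ge0.
rewrite (_ : (fun yt : R * n.-tuple R => wind A i.+1 (b + yt.1) yt.2) =
  (fun ct : R * n.-tuple R => wind A i.+1 ct.1 ct.2) \o (fun yt : R * n.-tuple R => (b + yt.1, yt.2))) //.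
apply: measurableT_comp; first exact: wind_meas.
apply: measurable_fun_pair => //; apply: measurable_funD => //.
Qed.

Lemma Phi_iint n : forall (c a b : R) i, 0 <= c ->
  (c%:E * Phi p n a (wind A i b) = iint n A i (fun s => (c * dens a b s)%:E))%E.
Proof.
elim: n => [|n IH] c a b i c0 /=; first by rewrite mule1 mulr1.
transitivity (c%:E * \int[mu]_y ((p a y * \1_(A i) (b + y))%:E * Phi p n y (wind A i.+1 (b + y))))%E.
  congr (_ * _)%E; apply: eq_integral => y _; rewrite indicE.
  have [h|h] := boolP (b + y \in A i).
    rewrite mulr1; congr (_ * _)%E; apply: Phi_ext => s _ /=.
    by rewrite mul1e.
  rewrite mulr0 mul0e.
  rewrite (_ : Phi p n y _ = 0%E) ?mule0 //.
  by rewrite -(Phi0 p n y); apply: Phi_ext => s _ /=; rewrite mul0e.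
rewrite -ge0_integralZl_EFin //; last 2 first.
- by move=> y _; apply: mule_ge0; [rewrite lee_fin mulr_ge0 // ?p0 // indicE ler0n|apply: (@Phi_ge0 _ p p0) => s; exact: wind_ge0].
- have := mh n i a b 1; congr measurable_fun; apply/funext => y; by rewrite mul1r.
transitivity (\int[mu]_y ((c * (p a y * \1_(A i) (b + y)))%:E * Phi p n y (wind A i.+1 (b + y))))%E.
  by apply: eq_integral => y _; rewrite muleA -EFinM.
rewrite (integral_shift b); last 2 first.
- exact: mh.
- by move=> y; apply: mule_ge0; [rewrite lee_fin !mulr_ge0 // ?p0 // indicE ler0n|apply: (@Phi_ge0 _ p p0) => s; exact: wind_ge0].
rewrite [RHS]integral_mkcond; apply: eq_integral => w _.
have bw : b + (w - b) = w by rewrite addrC subrK.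
rewrite /patch bw indicE; case: ifPn => wA.
  rewrite (_ : (true%:R : R) = 1) // mulr1.
  rewrite (@iint_ext n A i.+1 _ (fun s => ((c * p a (w - b)) * dens (w - b) w s)%:E)); last first.
    by move=> s _; rewrite mulrA.
  by rewrite -IH // mulr_ge0.
by rewrite (_ : (false%:R : R) = 0) // mulr0 mulr0 mul0e.
Qed.
End Dens.
Section Final.
Context {R : realType}.
Variables (V1 V2 : R -> R) (lam : R) (v : R -> R).
Hypothesis lam0 : 0 < lam.
Hypothesis vpos : forall x, 0 < v x.

Let pk := fun x y : R => kern V1 V2 x y * v y / (lam * v x).

Lemma wcfg_cons (a b w : R) s j : wcfg a b (w :: s) j.+1 = wcfg (w - b) w s j.
Proof. by case: j => [|j] //=; rewrite /wcfg /= opprB addrC subrK. Qed.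

Lemma Hamil_cons m (w : nat -> R) : Hamil V1 V2 m.+1 w =
  V1 (w 2%N - w 1%N) + V2 (w 2%N + w 0%N - 2 * w 1%N) + Hamil V1 V2 m (fun j => w j.+1).
Proof.
rewrite /Hamil [X in X + _ = _]big_nat_recl // [X in _ + X = _]big_nat_recl //.
ring.
Qed.

Lemma dens_formula a b s : dens pk a b s =
  v (wcfg a b s (size s).+1 - wcfg a b s (size s)) / (lam ^+ size s * v a)
  * expR (- Hamil V1 V2 (size s) (wcfg a b s)).
Proof.
have va0 x : v x != 0 by rewrite gt_eqF.
elim: s a b => [|w s IH] a b /=.
  rewrite /Hamil !big_geq // addr0 oppr0 expR0 mulr1 expr0 mul1r /wcfg /=.
  by rewrite opprB addrC subrK divff.
rewrite IH Hamil_cons.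
rewrite (_ : (fun j => wcfg a b (w :: s) j.+1) = wcfg (w - b) w s); last first.
  by apply/funext => j; rewrite wcfg_cons.
rewrite !wcfg_cons.
rewrite (_ : wcfg (w - b) w s 1 = w) // (_ : wcfg a b (w :: s) 0 = b - a) // (_ : wcfg (w - b) w s 0 = b); last by rewrite /wcfg /= opprB addrC subrK.
set H := Hamil V1 V2 (size s) (wcfg (w - b) w s).
rewrite /pk /kern.
rewrite (_ : w + (b - a) - 2 * b = w - b - a); last by ring.
rewrite (_ : - (V1 (w - b) + V2 (w - b - a) + H) = (- V1 (w - b) - V2 (w - b - a)) + - H); last by ring.
rewrite !expRD exprS.
have L0 : lam ^+ size s != 0 by rewrite expf_neq0 // gt_eqF.
set L := lam ^+ size s.
set E1 := expR _; set E2 := expR _; set E3 := expR _.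
have := va0 (w - b); have := va0 a; have : lam != 0 by rewrite gt_eqF.
move=> l0 h1 h2.
field.
by rewrite l0 h1 h2 L0.
Qed.

End Final.

Theorem proposition2p1 (R : realType) (V1 V2 : R -> R) (lam : R) (v : R -> R) :
  cond_C1 V1 -> cond_C2 V2 ->
  0 < lam -> is_spectral_radius (kern V1 V2) lam ->
  in_L2 v -> (forall x, 0 < v x) ->
  (forall x, (\int[@lebesgue_measure R]_y ((kern V1 V2 x y * v y)%:E))%E
             = (lam * v x)%:E) ->
  forall (a b : R) (d : measure_display) (T : measurableType d)
         (P : probability T R) (Y : nat -> T -> R),
  markov_chain P Y a (fun x y => kern V1 V2 x y * v y / (lam * v x)) ->
  let W := fun (n : nat) (om : T) => b + \sum_(1 <= i < n.+1) Y i om in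
  forall (n : nat) (A : nat -> set R), (forall i, measurable (A i)) ->
    P [set om | forall i, (1 <= i <= n)%N -> A i (W i om)] =
    iint n A 1 (fun s =>
      ((v (wcfg a b s n.+1 - wcfg a b s n) / (lam ^+ n * v a))
       * expR (- Hamil V1 V2 n (wcfg a b s)))%:E).
Proof.
move=> [mV1 _ _ _ _] [mV2 _ _ _] lam0 _ [mv _] vpos _ a b d T P Y [mY HM] W n A mA.
set pk := fun x y => kern V1 V2 x y * v y / (lam * v x).
have p0 : forall x y, 0 <= pk x y.
  move=> x y; rewrite /pk /kern divr_ge0 //.
    by rewrite mulr_ge0 // ?expR_ge0 // ltW.
  by rewrite ltW // mulr_gt0.
have mp : measurable_fun setT (fun xy : R * R => pk xy.1 xy.2).
  rewrite (_ : (fun xy => pk xy.1 xy.2) = (fun xy : R * R => (expR (- V1 xy.2 - V2 (xy.2 - xy.1)) * v xy.2) * expR (- ln (lam * v xy.1)))); last first.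
    apply/funext => -[x y] /=; rewrite /pk /kern expRN lnK //.
    by rewrite posrE mulr_gt0.
  apply: measurable_funM; first apply: measurable_funM.
  - apply: measurableT_comp; first exact: measurable_expR.
    apply: measurable_funB.
      apply: measurableT_comp => //; exact: measurableT_comp.
    apply: measurableT_comp => //; apply: measurable_funB => //.
  - exact: measurableT_comp.
  - apply: measurableT_comp; first exact: measurable_expR.
    apply: measurableT_comp => //; apply: measurableT_comp; first exact: measurable_ln.
    apply: measurable_funM; first exact: measurable_cst.
    exact: measurableT_comp.
rewrite /W (@event_Phi R pk mp p0 d T P Y mY a HM n A mA b).
rewrite -[Phi _ _ _ _]mul1e (@Phi_iint R pk mp p0 A mA n 1 a b 1 ler01).
apply: iint_ext => s sn; rewrite mul1r (@dens_formula R V1 V2 lam v lam0 vpos) sn.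
done.
Qed.
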